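(* Let $g>\tfrac12$, let $M_{\mathrm{I}},M_{\mathrm{II}}\in\mathbb{Z}_{\ge0}$, $M=M_{\mathrm{I}}+M_{\mathrm{II}}$, let $\mathcal{D}=((d_1,t_1),\ldots,(d_M,t_M))$ be an ordered list of pairwise distinct seed labels as described in the context, containing exactly $M_{\mathrm{I}}$ labels of Type I and $M_{\mathrm{II}}$ labels of Type II, and let $n\in\mathbb{Z}_{\ge0}$. For $N\in\{M,M+1\}$, $j=1,\ldots,N$ and $\eta>0$ define $$X^{(N)}_{(\mathrm{v},\mathrm{I}),j}(\eta)=L^{(g+j-\frac32)}_{\mathrm{v}}(-\eta),\qquad X^{(N)}_{(\mathrm{v},\mathrm{II}),j}(\eta)=(-1)^{j-1}\big(g-\tfrac12-\mathrm{v}\big)_{j-1}\,\eta^{N-j}L^{(\frac32-g-j)}_{\mathrm{v}}(\eta),$$ $$Z^{(N)}_{n,j}(\eta)=(-1)^{j-1}L^{(g+j-\frac32)}_{n+1-j}(\eta),$$ and let $\vec X^{(N)}_{(\mathrm{v},t)}$, $\vec Z^{(N)}_n$ denote the column vectors $(X^{(N)}_{(\mathrm{v},t),j})_{j=1}^N$, $(Z^{(N)}_{n,j})_{j=1}^N$. Then for $\eta>0$, $$\Xi_{\mathcal{D}}(\eta)=\eta^{-M_{\mathrm{II}}(M_{\mathrm{II}}-1)}\det\big(\vec X^{(M)}_{(d_1,t_1)}(\eta)\ \cdots\ \vec X^{(M)}_{(d_M,t_M)}(\eta)\big),$$ $$P_{\mathcal{D},n}(\eta)=\eta^{-M_{\mathrm{II}}(M_{\mathrm{II}}-1)}\det\big(\vec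 X^{(M+1)}_{(d_1,t_1)}(\eta)\ \cdots\ \vec X^{(M+1)}_{(d_M,t_M)}(\eta)\ \vec Z^{(M+1)}_n(\eta)\big).$$
   Context: $(a)_k=a(a+1)\cdots(a+k-1)$, $(a)_0=1$. For real $\alpha$ and $m\in\mathbb{Z}_{\ge0}$ the Laguerre polynomial is $L^{(\alpha)}_m(\eta)=\frac{1}{m!}\sum_{k=0}^m\frac{(-m)_k}{k!}(\alpha+k+1)_{m-k}\eta^k$, and $L^{(\alpha)}_m\equiv0$ for $m<0$. For $a\in\mathbb{R}$, $[a]'$ denotes the greatest integer strictly less than $a$. Fix $g>\frac12$. A seed label is a pair $(\mathrm{v},t)$ with $t\in\{\mathrm{I},\mathrm{II}\}$, where $\mathrm{v}\in\mathbb{Z}_{\ge0}$ if $t=\mathrm{I}$ and $\mathrm{v}\in\{0,1,\ldots,[g-\frac12]'\}$ if $t=\mathrm{II}$. Define, for $\eta>0$, $\mu_{(\mathrm{v},\mathrm{I})}(\eta)=e^{\eta}L^{(g-\frac12)}_{\mathrm{v}}(-\eta)$, $\mu_{(\mathrm{v},\mathrm{II})}(\eta)=\eta^{\frac12-g}L^{(\frac12-g)}_{\mathrm{v}}(\eta)$, and $P_n(\eta)=L^{(g-\frac12)}_n(\eta)$. The Wronskian with respect to $\eta$ is $\mathrm{W}[f_1,\ldots,f_m](\eta)=\det\big(\frac{d^{j-1}f_k}{d\eta^{j-1}}\big)_{1\le j,k\le m}$. For an ordered list $\mathcal{D}=((d_1,t_1),\ldots,(d_M,t_M))$ of seed labels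 with $M_{\mathrm{I}}$ of Type I and $M_{\mathrm{II}}$ of Type II, the denominator polynomial and the multi-indexed Laguerre polynomials are defined by $\Xi_{\mathcal{D}}(\eta)=\mathrm{W}[\mu_{(d_1,t_1)},\ldots,\mu_{(d_M,t_M)}](\eta)\,\eta^{(M_{\mathrm{I}}+g-\frac12)M_{\mathrm{II}}}e^{-M_{\mathrm{I}}\eta}$ and $P_{\mathcal{D},n}(\eta)=\mathrm{W}[\mu_{(d_1,t_1)},\ldots,\mu_{(d_M,t_M)},P_n](\eta)\,\eta^{(M_{\mathrm{I}}+g+\frac12)M_{\mathrm{II}}}e^{-M_{\mathrm{I}}\eta}$, $n\in\mathbb{Z}_{\ge0}$. *)

(* Defs.v *)
From HB Require Import structures.
From mathcomp Require Import all_boot all_order all_algebra.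
From mathcomp Require Import all_classical all_reals all_analysis.
Set Implicit Arguments. Unset Strict Implicit. Unset Printing Implicit Defensive.
Import Order.TTheory GRing.Theory Num.Theory.
Local Open Scope ring_scope.

Section Defs.
Variable R : realType.

Definition poch (a : R) (k : nat) : R := \prod_(i < k) (a + i%:R).

(* Laguerre polynomial L^(alpha)_m(x); identically zero for m < 0 *)
Definition laguerre (alpha : R) (m : int) (x : R) : R :=
  match m with
  | Posz m => (m`!%:R)^-1 *
      \sum_(k < m.+1) (poch (- m%:R) k / (k`!%:R)) * poch (alpha + k%:R + 1) (m - k) * x ^+ k
  | Negz _ => 0
  end.

(* [a]' : greatest integer strictly less than a *)
Definition brk' (a : R) : int := (Num.ceil a - 1)%R.

End Defs.

Inductive seedType := TI | TII.
Definition seedType_eqb (s t : seedType) : bool :=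
  match s, t with TI, TI | TII, TII => true | _, _ => false end.
Lemma seedType_eqP : Equality.axiom seedType_eqb.
Proof. by case; case; constructor. Qed.
HB.instance Definition _ := hasDecEq.Build seedType seedType_eqP.

Definition label := (nat * seedType)%type.

Section Defs2.
Variable R : realType.
Local Open Scope ring_scope.

Definition isTypeI (l : label) : bool := l.2 == TI.
Definition isTypeII (l : label) : bool := l.2 == TII.

Definition valid_label (g : R) (l : label) : Prop :=
  match l.2 with
  | TI => True
  | TII => (l.1%:Z <= brk' (g - 2^-1))%R
  end.

Definition mu (g : R) (l : label) : R -> R :=
  match l.2 with
  | TI => fun eta => expR eta * laguerre (g - 2^-1) l.1 (- eta)
  | TII => fun eta => eta `^ (2^-1 - g) * laguerre (2^-1 - g) l.1 eta
  end.

Definition Pfun (g : R) (n : nat) : R -> R := fun eta => laguerre (g - 2^-1) n eta.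

Definition wronskian (fs : seq (R -> R)) (eta : R) : R :=
  \det (\matrix_(j < size fs, k < size fs) (derive1n j (nth (fun _ => 0) fs k)) eta).

Definition MI (D : seq label) : nat := count isTypeI D.
Definition MII (D : seq label) : nat := count isTypeII D.

Definition Xi (g : R) (D : seq label) (eta : R) : R :=
  wronskian (map (mu g) D) eta * eta `^ (((MI D)%:R + g - 2^-1) * (MII D)%:R)
  * expR (- ((MI D)%:R * eta)).

Definition PD (g : R) (D : seq label) (n : nat) (eta : R) : R :=
  wronskian (rcons (map (mu g) D) (Pfun g n)) eta
  * eta `^ (((MI D)%:R + g + 2^-1) * (MII D)%:R)
  * expR (- ((MI D)%:R * eta)).

(* X^{(N)}_{(v,t),j}(eta), j is 1-based *)
Definition Xent (g : R) (N : nat) (l : label) (j : nat) (eta : R) : R :=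
  match l.2 with
  | TI => laguerre (g + j%:R - 3/2) l.1 (- eta)
  | TII => (-1) ^+ (j.-1) * poch (g - 2^-1 - (l.1)%:R) (j.-1) * eta ^+ (N - j)
           * laguerre (3/2 - g - j%:R) l.1 eta
  end.

(* Z^{(N)}_{n,j}(eta), j is 1-based *)
Definition Zent (g : R) (n : nat) (j : nat) (eta : R) : R :=
  (-1) ^+ (j.-1) * laguerre (g + j%:R - 3/2) (n%:Z + 1 - j%:Z) eta.

End Defs2.

(* Main.v *)
Require Import Defs.
From HB Require Import structures.
From mathcomp Require Import all_boot all_order all_algebra.
From mathcomp Require Import all_classical all_reals all_analysis.
From mathcomp Require Import ring lra.
Set Implicit Arguments. Unset Strict Implicit. Unset Printing Implicit Defensive.
Import Order.TTheory GRing.Theory Num.Theory.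
Local Open Scope ring_scope.

Arguments laguerre : simpl never.
Section Lag.
Variable R : realType.

Lemma pochS_l (b : R) r : poch b r.+1 = b * poch (b + 1) r.
Proof.
rewrite /poch big_ord_recl /= addr0; congr (_ * _); apply: eq_bigr => i _.
by rewrite /bump /= add1n -nat1r addrA.
Qed.

Lemma pochS_r (b : R) r : poch b r.+1 = poch b r * (b + r%:R).
Proof. by rewrite /poch big_ord_recr. Qed.

Lemma poch0 (b : R) : poch b 0 = 1.
Proof. by rewrite /poch big_ord0. Qed.

Lemma poch_neg (m k : nat) : (k <= m)%N ->
  (m - k)`!%:R * poch (- (m%:R : R)) k = (-1) ^+ k * m`!%:R.
Proof.
elim: k => [|k IH] km; first by rewrite poch0 subn0 mulr1 expr0 mul1r.
have km' : (k <= m)%N by apply: ltnW.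
rewrite pochS_r exprS mulN1r mulNr -(IH km').
have f : ((m - k)`!%:R : R) = (m%:R - k%:R) * (m - k.+1)`!%:R.
  by rewrite -subnSK // factS natrM subnSK // natrB.
rewrite f; ring.
Qed.

Definition Gp (b : R) (r : nat) := poch b r / r`!%:R.
Definition dco (a : R) (m k : nat) := (-1) ^+ k / k`!%:R * Gp (a + k%:R + 1) (m - k).
Definition Lp (a : R) (m : nat) : {poly R} := \poly_(k < m.+1) dco a m k.
Definition Lpi (a : R) (m : int) : {poly R} :=
  match m with Posz m => Lp a m | Negz _ => 0 end.

Lemma fact_neq0 n : (n`!%:R : R) != 0.
Proof. by rewrite pnatr_eq0 -lt0n fact_gt0. Qed.

Lemma laguerreE a (m : int) x : laguerre a m x = (Lpi a m).[x].
Proof.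
case: m => [m|m]; last by rewrite /laguerre /= horner0.
rewrite /laguerre /= horner_poly mulr_sumr; apply: eq_bigr => k _.
have km : (k <= m)%N by rewrite -ltnS.
rewrite /dco /Gp !mulrA; congr (_ * _).
have h := poch_neg km.
have f1 := fact_neq0 (m - k); have f2 := fact_neq0 m; have f3 := fact_neq0 k.
have -> : poch (- (m%:R : R)) k = (-1) ^+ k * m`!%:R / (m - k)`!%:R.
  by rewrite -h; field.
field; by rewrite f1 f2 f3.
Qed.

Lemma Gp0 b : Gp b 0 = 1.
Proof. by rewrite /Gp poch0 fact0 divr1. Qed.

Lemma Gp_pascal b r : Gp b r.+1 + Gp (b + 1) r = Gp (b + 1) r.+1.
Proof.
rewrite /Gp pochS_l pochS_r factS natrM.
have f := fact_neq0 r.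
have g : (r.+1%:R : R) != 0 by rewrite pnatr_eq0.
rewrite -natr1; field; by rewrite f natr1 g.
Qed.

Lemma Gp_shift b r : b * Gp (b + 1) r = (b + r%:R) * Gp b r.
Proof. by rewrite /Gp !mulrA -pochS_l pochS_r; ring. Qed.

Lemma deriv_Lp a m : deriv (Lp a m) = - Lpi (a + 1) (m%:Z - 1).
Proof.
case: m => [|m].
  rewrite /= /Lp; apply/polyP => k; rewrite coef_deriv coef_poly coefN coef0 /=.
  by rewrite oppr0 mul0rn.
have -> : (m.+1%:Z - 1 = m%:Z)%R by rewrite -[m.+1]addn1 PoszD addrK.
apply/polyP => k; rewrite coef_deriv coefN /Lp !coef_poly ltnS.
case: ifP => _; last by rewrite mul0rn oppr0.
rewrite /dco subSS -mulr_natr exprS factS natrM.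
have -> : a + k.+1%:R + 1 = a + 1 + k%:R + 1 by rewrite -natr1; ring.
have f := fact_neq0 k.
have g : (k.+1%:R : R) != 0 by rewrite pnatr_eq0.
field; by rewrite nat1r f g.
Qed.

Lemma Lp_sub_deriv a m : Lp a m - deriv (Lp a m) = Lp (a + 1) m.
Proof.
rewrite deriv_Lp opprK.
case: m => [|m].
  by rewrite /= addr0; apply/polyP => k; rewrite !coef_poly; case: k => [|k]; rewrite /= ?/dco ?Gp0.
have -> : (m.+1%:Z - 1 = m%:Z)%R by rewrite -[m.+1]addn1 PoszD addrK.
apply/polyP => k; rewrite coefD /Lp /= !coef_poly.
case: (ltngtP k m.+1) => hk.
- have hk' : (k < m.+2)%N by apply: ltnW.
  rewrite hk' /dco subSn // -mulrDr; congr (_ * _).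
  have -> : a + 1 + k%:R + 1 = (a + k%:R + 1) + 1 by ring.
  by rewrite Gp_pascal.
- by rewrite ltnNge hk /= addr0.
- by rewrite hk ltnSn addr0 /dco subnn !Gp0.
Qed.

Lemma Lp_D3 a m : a *: Lp a m + 'X * deriv (Lp a m) = (a + m%:R) *: Lp (a - 1) m.
Proof.
have key k : (k <= m)%N -> dco a m k * (a + k%:R) = (a + m%:R) * dco (a - 1) m k.
  move=> km; rewrite /dco.
  have -> : a - 1 + k%:R + 1 = a + k%:R by ring.
  have s := Gp_shift (a + k%:R) (m - k).
  rewrite -[a + k%:R + (m - k)%:R]addrA -natrD subnKC // in s.
  rewrite -mulrA [Gp _ _ * _]mulrC s; ring.
apply/polyP => k; rewrite coefD coefZ coefXM coefZ /Lp coef_poly.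
case: k => [|k].
  by rewrite /= coef_poly /= addr0 -(key 0%N) // addr0 mulrC.
rewrite /= coef_deriv !coef_poly !ltnS.
case: ifP => hk; last by rewrite mulr0 mul0rn addr0 mulr0.
have kk := key k.+1 hk. rewrite -[_ *+ k.+1]mulr_natr -kk; ring.
Qed.

Lemma deriv_Lpi a (m : int) : deriv (Lpi a m) = - Lpi (a + 1) (m - 1).
Proof.
case: m => [m|m]; first exact: deriv_Lp.
by rewrite /= deriv0 /= oppr0.
Qed.

Definition FI (b : R) (v : nat) : R -> R := fun x => expR x * (Lp b v).[- x].

Lemma derive1_FI b v x : derive1 (FI b v) x = FI (b + 1) v x.
Proof.
have e : FI b v = (expR : R -> R) * horner (Lp b v \Po (- 'X)).
  by apply/funext => y; rewrite /FI fctE horner_comp hornerN hornerX.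
rewrite e derive1E deriveM; [|exact: derivable_expR|exact: derivable_horner].
rewrite !derive_val deriv_comp derivN derivX.
rewrite /FI -Lp_sub_deriv !horner_comp !hornerE /= horner_comp hornerN hornerX. rewrite /GRing.scale /=.
ring.
Qed.

Definition FII (C b : R) (v : nat) : R -> R := fun x => C * (x `^ b * (Lp b v).[x]).

Lemma derive1_FII C b v x : 0 < x ->
  derive1 (FII C b v) x = FII (C * (b + v%:R)) (b - 1) v x.
Proof.
move=> x0.
have e : FII C b v = C \*: ((@powR R ^~ b) * horner (Lp b v)).
  by apply/funext => y; rewrite /FII !fctE.
have H : is_derive x 1 ((@powR R ^~ b) * horner (Lp b v))
   (x `^ b *: (Lp b v)^`().[x] + (Lp b v).[x] *: (b * x `^ (b - 1))).
  by apply: is_deriveM; exact: is_derive1_powR.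
have H2 := is_deriveZ C H.
case: H2 => _ D2.
rewrite e derive1E D2.
have h3 := congr1 (fun p => horner p x) (Lp_D3 b v).
rewrite /= !hornerE /= in h3.
have px : x `^ (b - 1) * x = x `^ b.
  rewrite -{2}(powRr1 (ltW x0)) -powRD; [by rewrite subrK | by rewrite (gt_eqF x0) implybT].
rewrite /FII -px /GRing.scale /=.
have -> : C * (b + v%:R) * (x `^ (b - 1) * (Lp (b - 1) v).[x])
  = C * x `^ (b - 1) * ((b + v%:R) * (Lp (b - 1) v).[x]) by ring.
rewrite -h3; ring.
Qed.

Lemma derive1n_iter (f : R -> R) (F : nat -> R -> R) :
  (forall x, 0 < x -> f x = F 0%N x) ->
  (forall j x, 0 < x -> derive1 (F j) x = F j.+1 x) ->
  forall j x, 0 < x -> derive1n j f x = F j x.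
Proof.
move=> h0 hS; elim => [|j IH] x x0; first exact: h0.
rewrite derive1nS derive1E (@near_eq_derive _ _ _ _ (F j)).
  by rewrite -derive1E hS.
near=> y; apply: IH; near: y; exact: lt_nbhsr.
Unshelve. all: by end_near.
Qed.

Definition FP (a : R) (n : nat) (j : nat) : R -> R :=
  horner ((-1) ^+ j *: Lpi (a + j%:R) (n%:Z - j%:Z)).

Lemma derive1_FP a n j x : derive1 (FP a n j) x = FP a n j.+1 x.
Proof.
rewrite /FP -derivE derivZ deriv_Lpi.
have -> : a + j%:R + 1 = a + j.+1%:R by rewrite -natr1 addrA.
have -> : (n%:Z - j%:Z - 1 = n%:Z - j.+1%:Z)%R by rewrite -addn1 PoszD opprD addrA.
by rewrite scalerN -scaleNr exprS mulN1r.
Qed.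

Lemma param1 (g : R) j : g + j.+1%:R - 3 / 2 = g - 2^-1 + j%:R.
Proof. by rewrite -natr1; field. Qed.

Lemma param2 (g : R) j : 3 / 2 - g - j.+1%:R = 2^-1 - g - j%:R.
Proof. by rewrite -natr1; field. Qed.

Lemma mu_deriv_I (g : R) v N j (x : R) : 0 < x ->
  derive1n j (mu g (v, TI)) x = expR x * Xent g N (v, TI) j.+1 x.
Proof.
move=> x0.
rewrite (@derive1n_iter _ (fun j => FI (g - 2^-1 + j%:R) v)) //.
- by rewrite /Xent /= laguerreE /FI param1.
- by move=> y _; rewrite /mu /= laguerreE /= /FI addr0.
- by move=> k y _; rewrite derive1_FI -addrA natr1.
Qed.

Lemma mu_deriv_II (g : R) v N j (x : R) : (j < N)%N -> 0 < x ->
  derive1n j (mu g (v, TII)) x =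
    x `^ (2^-1 - g - N%:R + 1) * Xent g N (v, TII) j.+1 x.
Proof.
move=> jN x0.
rewrite (@derive1n_iter _ (fun j => FII ((-1) ^+ j * poch (g - 2^-1 - v%:R) j)
                                    (2^-1 - g - j%:R) v)) //.
- rewrite /Xent /= laguerreE param2 /FII.
  rewrite -(powR_mulrn _ (ltW x0)) natrB //.
  have -> : x `^ (2^-1 - g - N%:R + 1) * ((-1) ^+ j * poch (g - 2^-1 - v%:R) j *
      x `^ (N%:R - j.+1%:R) * (Lp (2^-1 - g - j%:R) v).[x])
    = (-1) ^+ j * poch (g - 2^-1 - v%:R) j *
      ((x `^ (2^-1 - g - N%:R + 1) * x `^ (N%:R - j.+1%:R)) * (Lp (2^-1 - g - j%:R) v).[x])
    by ring.
  rewrite -powRD; last by rewrite (gt_eqF x0) implybT.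
  by rewrite -natr1; congr (_ * (_ `^ _ * _)); ring.
- by move=> y _; rewrite /mu /= laguerreE /= /FII expr0 poch0 !mul1r subr0.
- move=> k y y0; rewrite derive1_FII //; congr FII.
  + rewrite exprS pochS_r -natr1; ring.
  + by rewrite -natr1; ring.
Qed.

Lemma P_deriv (g : R) n j (x : R) : 0 < x -> derive1n j (Defs.Pfun g n) x = Zent g n j.+1 x.
Proof.
move=> x0.
rewrite (@derive1n_iter _ (FP (g - 2^-1) n)) //.
- rewrite /Zent /FP /= hornerZ laguerreE param1; congr (_ * (Lpi _ _).[x]).
  by rewrite -addn1 PoszD; ring.
- by move=> y _; rewrite /Defs.Pfun /FP expr0 scale1r addr0 subr0 laguerreE.
- by move=> k y _; rewrite derive1_FP.
Qed.

Definition fac (g : R) (N : nat) (l : label) (x : R) : R :=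
  match l.2 with TI => expR x | TII => x `^ (2^-1 - g - N%:R + 1) end.

Lemma mu_deriv (g : R) l N j (x : R) : (j < N)%N -> 0 < x ->
  derive1n j (mu g l) x = fac g N l x * Xent g N l j.+1 x.
Proof. by case: l => v [] jN x0; [exact: mu_deriv_I | exact: mu_deriv_II]. Qed.

Lemma det_scale_cols n (f : nat -> R) (X : nat -> nat -> R) :
  \det (\matrix_(j < n, k < n) (f k * X j k)) =
  (\prod_(k < n) f k) * \det (\matrix_(j < n, k < n) X j k).
Proof.
have -> : \matrix_(j < n, k < n) (f k * X j k) =
    (\matrix_(j < n, k < n) X j k) *m diag_mx (\row_(k < n) f k).
  by apply/matrixP => j k; rewrite mul_mx_diag !mxE mulrC.
rewrite det_mulmx det_diag mulrC; congr (_ * _); apply: eq_bigr => i _.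
by rewrite mxE.
Qed.

Lemma prod_fac (g : R) N x (s : seq label) :
  \prod_(l <- s) fac g N l x =
  expR x ^+ count isTypeI s * (x `^ (2^-1 - g - N%:R + 1)) ^+ count isTypeII s.
Proof.
elim: s => [|[v t] s IH]; first by rewrite big_nil !expr0 mulr1.
rewrite big_cons IH; case: t => /=; rewrite /fac /=; rewrite ?exprS; ring.
Qed.

Lemma size_count (s : seq label) : size s = (count isTypeI s + count isTypeII s)%N.
Proof.
elim: s => [|[v t] s IH] //=; case: t; rewrite /isTypeI /isTypeII /= IH.
  by rewrite add1n.
by rewrite add0n addnS.
Qed.

Lemma nat_mm1 m : (((m * (m - 1))%N)%:R : R) = m%:R * (m%:R - 1).
Proof.
case: m => [|m]; first by rewrite mul0n mul0r.
by rewrite subSS subn0 natrM -natr1 addrK.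
Qed.

Lemma arith (x e1 e3 : R) (mI mII : nat) : 0 < x -> e1 + e3 = 1 - mII%:R ->
  expR x ^+ mI * (x `^ e1) ^+ mII * x `^ (e3 * mII%:R) * expR (- (mI%:R * x))
  = x ^- (mII * (mII - 1)).
Proof.
move=> x0 he.
rewrite -(powR_mulrn _ (powR_ge0 _ _)) -powRrM -expRM_natl.
set A := expR (mI%:R * x); set B := x `^ (e1 * mII%:R); set C := x `^ (e3 * mII%:R).
have -> : A * B * C * expR (- (mI%:R * x)) = (A * expR (- (mI%:R * x))) * (B * C) by ring.
rewrite /A /B /C -expRD addrN expR0 mul1r -powRD; last by rewrite (gt_eqF x0) implybT.
rewrite -(powR_invn _ (ltW x0)) nat_mm1 -mulrDl he; congr (_ `^ _); ring.
Qed.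
End Lag.

Unset Implicit Arguments.

Theorem mainTheorem1 (R : realType) (g : R) (mI mII : nat) (D : seq label) (n : nat) :
  2^-1 < g ->
  (forall l, l \in D -> valid_label g l) ->
  uniq D ->
  count isTypeI D = mI ->
  count isTypeII D = mII ->
  forall eta : R, 0 < eta ->
    Xi g D eta =
      eta ^- (mII * (mII - 1)) *
      \det (\matrix_(j < size D, k < size D) Xent g (size D) (nth (0%N, TI) D k) j.+1 eta)
    /\
    PD g D n eta =
      eta ^- (mII * (mII - 1)) *
      \det (\matrix_(j < (size D).+1, k < (size D).+1)
              (if (k < size D)%N then Xent g (size D).+1 (nth (0%N, TI) D k) j.+1 eta
               else Zent g n j.+1 eta)).
Proof.
move=> _ _ _ hI hII eta eta0.
have hs := size_count D; rewrite hI hII in hs.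
split.
- rewrite /Xi.
  have W : wronskian (map (mu g) D) eta =
     (\prod_(k < size D) fac g (size D) (nth (0%N, TI) D k) eta) *
     \det (\matrix_(j < size D, k < size D) Xent g (size D) (nth (0%N, TI) D k) j.+1 eta).
    rewrite -(det_scale_cols (size D) (fun k => fac g (size D) (nth (0%N, TI) D k) eta)
                  (fun j k => Xent g (size D) (nth (0%N, TI) D k) j.+1 eta)).
    rewrite /wronskian size_map; congr (\det _); apply/matrixP => j k; rewrite !mxE.
    by rewrite (nth_map (0%N, TI)) // (@mu_deriv R g _ (size D)).

  have P : \prod_(k < size D) fac g (size D) (nth (0%N, TI) D k) eta =
      \prod_(l <- D) fac g (size D) l eta by rewrite (big_nth (0%N, TI)) big_mkord.
  rewrite W P prod_fac /MI /MII hI hII.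
  rewrite -(@arith _ eta (2^-1 - g - (size D)%:R + 1) (mI%:R + g - 2^-1) mI mII) //;
    last by rewrite hs natrD; ring.
  ring.
- rewrite /PD.
  set fP := fun k : nat => if (k < size D)%N then fac g (size D).+1 (nth (0%N, TI) D k) eta else 1.
  set XP := fun j k : nat => if (k < size D)%N
      then Xent g (size D).+1 (nth (0%N, TI) D k) j.+1 eta else Zent g n j.+1 eta.
  have W : wronskian (rcons (map (mu g) D) (Defs.Pfun g n)) eta =
     (\prod_(k < (size D).+1) fP k) *
     \det (\matrix_(j < (size D).+1, k < (size D).+1) XP j k).
    rewrite -(det_scale_cols (size D).+1 fP XP).
    rewrite /wronskian size_rcons size_map; congr (\det _); apply/matrixP => j k.
    rewrite !mxE nth_rcons size_map /fP /XP.
    case: ifP => hk.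
      by rewrite (nth_map (0%N, TI)) // (@mu_deriv R g _ (size D).+1).
    have -> : (k : nat) = size D.
      by apply/eqP; rewrite eqn_leq -ltnS ltn_ord leqNgt hk.
    by rewrite eqxx P_deriv // mul1r.
  rewrite W big_ord_recr /= {2}/fP ltnn mulr1.
  have P : \prod_(k < size D) fP (widen_ord (leqnSn (size D)) k) =
      \prod_(l <- D) fac g (size D).+1 l eta.
    rewrite (big_nth (0%N, TI)) big_mkord; apply: eq_bigr => k _.
    by rewrite /fP /= ltn_ord.
  rewrite P prod_fac /MI /MII hI hII.
  rewrite -(@arith _ eta (2^-1 - g - (size D).+1%:R + 1) (mI%:R + g + 2^-1) mI mII) //;
    last by rewrite hs -[(mI + mII).+1]addn1 !natrD; field.
  rewrite /XP; ring.
Qed.
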